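(* Let $\tau$ be a tuple of positive integers, $0\le k\le \ell$, and $\hat P_\tau=C\sqcup O$ the $k$-decomposition. Let $F$ be a nonempty face of $\mathcal{O}_{C,O}(\tau)$ such that none of the nonnegativity inequalities $x_p\ge 0$ ($p\in C$) and none of the chain inequalities holds with equality at every point of $F$, let $\varphi$ be the partition of $O$ associated with $F$, and let $\pi=\varphi\cup\{\{c\}:c\in C\}$. Then the quotient poset $\hat P_\tau/\pi$ is of the form $\hat P_{\tau'}$ for some tuple $\tau'$ of positive integers; that is, after removing its minimum $\{\hat0\}$ and its maximum (the block containing $\hat1$), it is isomorphic to $P_{\tau'}$.
   Context: Let $\tau=(\tau_1,\dots,\tau_\ell)$ be positive integers. The poset $P_\tau$ has elements $y^i_j$ ($1\le i\le\ell$, $1\le j\le\tau_i$) with $y^i_j<y^{i'}_{j'}$ iff $i<i'$; $Y^i=\{y^i_1,\dots,y^i_{\tau_i}\}$; for a tuple $\tau'$ of positive integers $P_{\tau'}$ is defined in the same way (the empty tuple giving the empty poset). $\hat P_\tau=P_\tau\cup\{\hat0,\hat1\}$ with new minimum $\hat0$ and maximum $\hat1$, $Y^0=\{\hat0\}$, $Y^{\ell+1}=\{\hat1\}$; $\prec$ is the covering relation. The $k$-decomposition is $C=Y^0\cup\dots\cup Y^k$, $O=Y^{k+1}\cup\dots\cup Y^{\ell+1}$. The chain-order polytope $\mathcal{O}_{C,O}(\tau)\subseteq\mathbb{R}^{\hat P_\tau}$ consists of all $x$ with $x_{\hat0}=0$, $x_{\hat1}=1$, $x_p\ge0$ for $p\in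 C$ (nonnegativity inequalities), $x_a\le x_b$ for $a,b\in O$ with $a\prec b$ (order inequalities), and $x_{p_1}+\dots+x_{p_k}\le x_q$ for all $p_i\in Y^i$ ($1\le i\le k$), $q\in Y^{k+1}$ (chain inequalities). The partition $\varphi$ of $O$ associated with $F$ has as blocks the connected components of the graph with vertex set $O$ and edges $\{a,b\}$ for all $a\prec b$ in $O$ with $x_a=x_b$ for every $x\in F$. The quotient poset $\hat P_\tau/\pi$ is the set of blocks of $\pi$ ordered by the transitive closure of ''$B\le B'$ iff $p\le q$ for some $p\in B$, $q\in B'$''. *)

(* Defs.v *)
From HB Require Import structures.
From mathcomp Require Import all_boot all_order all_algebra.
From mathcomp Require Import reals.
From Stdlib Require Import Relations.
Set Implicit Arguments. Unset Strict Implicit. Unset Printing Implicit Defensive.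
Import Order.TTheory GRing.Theory Num.Theory.

(* Elements of hat P_tau: pairs (i, j), level i in 0..l+1, j < width i,
   where width 0 = width (l+1) = 1 (for hat0, hat1) and width i = tau_i. *)
Definition width (tau : seq nat) (i : nat) : nat :=
  if i == 0 then 1 else if i == (size tau).+1 then 1 else nth 0 tau i.-1.

Definition maxw (tau : seq nat) : nat := (foldr maxn 1 tau).+1.

Definition elt (tau : seq nat) : Type :=
  {p : 'I_(size tau).+2 * 'I_(maxw tau) | (nat_of_ord p.2 < width tau p.1)%N}.

Definition level (tau : seq nat) (p : elt tau) : nat := nat_of_ord (val p).1.

Definition hlt (tau : seq nat) (p q : elt tau) : bool := (level p < level q)%N.
Definition hle (tau : seq nat) (p q : elt tau) : bool := (p == q) || hlt p q.
Definition hcovers (tau : seq nat) (p q : elt tau) : Prop :=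
  hlt p q /\ ~ (exists r, hlt p r /\ hlt r q).

Local Open Scope ring_scope.

Definition in_COP (R : realType) (tau : seq nat) (k : nat) (x : elt tau -> R) : Prop :=
  [/\ (forall p, level p = 0%N -> x p = 0),
      (forall p, level p = (size tau).+1 -> x p = 1),
      (forall p, (level p <= k)%N -> 0 <= x p),
      (forall a b, (k < level a)%N -> (k < level b)%N -> hcovers a b -> x a <= x b)
    & (forall (g : nat -> elt tau) (q : elt tau),
         (forall i, (1 <= i <= k)%N -> level (g i) = i) -> level q = k.+1 ->
         \sum_(1 <= i < k.+1) x (g i) <= x q)].

Definition is_face (R : realType) (T : finType) (P F : (T -> R) -> Prop) : Prop :=
  exists (c : T -> R) (d : R),
    (forall x, P x -> \sum_(p : T) c p * x p <= d) /\
    (forall x, F x <-> (P x /\ \sum_(p : T) c p * x p = d)).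

Definition phi_edge (R : realType) (tau : seq nat) (k : nat)
  (F : (elt tau -> R) -> Prop) (a b : elt tau) : Prop :=
  [/\ (k < level a)%N, (k < level b)%N, hcovers a b & forall x, F x -> x a = x b].

(* a ~ b iff a, b lie in the same block of pi = phi U {{c} : c in C} *)
Definition pi_equiv (R : realType) (tau : seq nat) (k : nat)
  (F : (elt tau -> R) -> Prop) : relation (elt tau) :=
  clos_refl_sym_trans _ (phi_edge k F).

(* order of the quotient poset, lifted to elements: transitive closure of
   "B <= B' iff p <= q for some p in B, q in B'" *)
Definition quot_le (R : realType) (tau : seq nat) (k : nat)
  (F : (elt tau -> R) -> Prop) : relation (elt tau) :=
  clos_trans _ (fun u v => exists u' v',
     pi_equiv k F u u' /\ pi_equiv k F v v' /\ hle u' v').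

(* Main.v *)
Require Import Defs.
From HB Require Import structures.
From mathcomp Require Import all_boot all_order all_algebra.
From mathcomp Require Import reals boolp zify.
From Stdlib Require Import Relations.
Import Order.TTheory GRing.Theory Num.Theory.
Set Implicit Arguments. Unset Strict Implicit.

Lemma foldr_maxn_ge1 (s : seq nat) : (1 <= foldr maxn 1 s)%N.
Proof. elim: s => //= x s IH; by rewrite leq_max IH orbT. Qed.

Lemma foldr_maxn_mem (s : seq nat) x : x \in s -> (x <= foldr maxn 1 s)%N.
Proof.
elim: s => //= y s IH; rewrite in_cons => /orP [/eqP -> | /IH H].
  by rewrite leq_maxl.
by rewrite leq_max H orbT.
Qed.

Lemma width_lt_maxw (tau : seq nat) i : (width tau i < maxw tau)%N.
Proof.
rewrite /width /maxw ltnS.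
case: (i == 0)%N; first exact: foldr_maxn_ge1.
case: (i == (size tau).+1)%N; first exact: foldr_maxn_ge1.
case: (ltnP i.-1 (size tau)) => H.
  by apply: foldr_maxn_mem; apply: mem_nth.
by rewrite nth_default.
Qed.

Section G.
Variables (T : finType) (eqv : rel T) (pos : T -> nat).
Hypothesis eqv_refl : forall a, eqv a a.
Hypothesis eqv_sym : forall a b, eqv a b -> eqv b a.
Hypothesis eqv_trans : forall a b c, eqv a b -> eqv b c -> eqv a c.
Hypothesis pos_compat : forall a b, eqv a b -> pos a = pos b.
Variables t0 t1 : T.
Hypothesis H0 : forall a, eqv a t0 || (pos t0 < pos a)%N.
Hypothesis H1 : forall a, eqv a t1 || (pos a < pos t1)%N.
Hypothesis H01 : (pos t0 < pos t1)%N.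

Definition ps := [seq p <- iota 0 (pos t1).+1 | has (fun a => pos a == p) (enum T)].
Definition L a := index (pos a) ps.

Lemma ps_sorted : sorted ltn ps.
Proof. apply: sorted_filter; [exact: ltn_trans | exact: iota_ltn_sorted]. Qed.
Lemma ps_uniq : uniq ps.
Proof. exact: filter_uniq (iota_uniq _ _). Qed.

Lemma pos_le_t1 a : (pos a <= pos t1)%N.
Proof. by case/orP: (H1 a) => [/pos_compat -> | /ltnW]. Qed.

Lemma pos_in_ps a : pos a \in ps.
Proof.
rewrite mem_filter mem_iota /= add0n ltnS pos_le_t1 andbT.
by apply/hasP; exists a; rewrite ?mem_enum.
Qed.

Lemma index_lt_ps x y : x \in ps -> y \in ps -> (index x ps < index y ps)%N = (x < y)%N.
Proof.
move=> hx hy; apply/idP/idP.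
  by move=> hh; have := sorted_ltn_index ltn_trans ps_sorted x y hx hy hh.
move=> hxy; rewrite ltnNge; apply/negP; rewrite leq_eqVlt => /orP [/eqP e | h].
  have : nth 0%N ps (index y ps) = nth 0%N ps (index x ps) by rewrite e.
  by rewrite !nth_index // => e'; move: hxy; rewrite e' ltnn.
have := sorted_ltn_index ltn_trans ps_sorted y x hy hx h.
by move=> h'; move: (ltn_trans hxy h'); rewrite ltnn.
Qed.

Lemma L_lt a b : (L a < L b)%N = (pos a < pos b)%N.
Proof. exact: index_lt_ps (pos_in_ps a) (pos_in_ps b). Qed.

Definition M := size ps.

Lemma L_ltM a : (L a < M)%N.
Proof. by rewrite /L /M index_mem pos_in_ps. Qed.

Lemma L_occ t : (t < M)%N -> exists a, L a = t.
Proof.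
move=> ht; have := mem_nth 0%N ht; rewrite mem_filter => /andP [/hasP [a _ /eqP e] _].
by exists a; rewrite /L e index_uniq // ps_uniq.
Qed.

Lemma L_t0 : L t0 = 0%N.
Proof.
have [a ha] := @L_occ 0%N (leq_ltn_trans (leq0n _) (L_ltM t0)).
apply/eqP; rewrite -leqn0 leqNgt; apply/negP => h.
move: h; rewrite -ha L_lt => h.
case/orP: (H0 a) => [/pos_compat e | h'].
  by move: h; rewrite e ltnn.
by move: (ltn_trans h h'); rewrite ltnn.
Qed.

Lemma L_t1 : L t1 = M.-1.
Proof.
have hM : (0 < M)%N := leq_ltn_trans (leq0n _) (L_ltM t0).
have hM' : (M.-1 < M)%N by rewrite ltn_predL.
have [a ha] := L_occ hM'.
have := L_ltM t1; suff : (M.-1 <= L t1)%N by lia.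
rewrite leqNgt; apply/negP; rewrite -ha L_lt => h.
case/orP: (H1 a) => [/pos_compat e | h'].
  by move: h; rewrite e ltnn.
by move: (ltn_trans h h'); rewrite ltnn.
Qed.

Lemma M_ge2 : (2 <= M)%N.
Proof.
have := L_ltM t1; rewrite L_t1.
have : (L t0 < L t1)%N by rewrite L_lt.
rewrite L_t0 L_t1; case: M => //= n; lia.
Qed.

Definition rep a := nth a (enum T) (find (eqv a) (enum T)).

Lemma has_eqv a : has (eqv a) (enum T).
Proof. by apply/hasP; exists a; rewrite ?mem_enum. Qed.

Lemma eqv_rep a : eqv a (rep a).
Proof. exact: nth_find (has_eqv a). Qed.

Lemma rep_eq a b : eqv a b -> rep a = rep b.
Proof.
move=> hab; rewrite /rep.
have -> : find (eqv a) (enum T) = find (eqv b) (enum T).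
  apply: eq_find => c; apply/idP/idP => h; eauto.
by apply: set_nth_default; rewrite -has_find has_eqv.
Qed.

Lemma rep_rep a : rep (rep a) = rep a.
Proof. by rewrite (rep_eq (eqv_sym (eqv_rep a))). Qed.

Lemma L_compat a b : eqv a b -> L a = L b.
Proof. by move=> h; rewrite /L (pos_compat h). Qed.

Definition Rl t := [seq r <- enum T | (rep r == r) && (L r == t)].
Definition cnt t := size (Rl t).

Lemma Rl_uniq t : uniq (Rl t).
Proof. exact: filter_uniq (enum_uniq _). Qed.

Lemma rep_in_Rl a : rep a \in Rl (L a).
Proof.
by rewrite mem_filter mem_enum rep_rep eqxx -(L_compat (eqv_rep a)) eqxx.
Qed.

Lemma cnt_pos t : (t < M)%N -> (0 < cnt t)%N.
Proof.
move=> /L_occ [a <-]; rewrite /cnt lt0n size_eq0; apply/negP => /eqP e.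
by have := rep_in_Rl a; rewrite e.
Qed.

Lemma cnt_le1 t c : (forall r, L r = t -> eqv r c) -> (cnt t <= 1)%N.
Proof.
move=> h; rewrite /cnt.
apply: (@leq_trans (size [:: rep c])) => //.
apply: uniq_leq_size (Rl_uniq t) _ => r; rewrite mem_filter => /andP [/andP [/eqP hr /eqP ht] _].
by rewrite inE -hr; apply/eqP; apply: rep_eq; apply: h.
Qed.

Lemma cnt0 : cnt 0 = 1%N.
Proof.
apply/eqP; rewrite eqn_leq cnt_pos ?andbT; last exact: leq_ltn_trans (leq0n _) M_ge2.
apply: (cnt_le1 (c := t0)) => r hr.
case/orP: (H0 r) => // h; by move: h; rewrite -L_lt hr L_t0.
Qed.

Lemma cntM : cnt M.-1 = 1%N.
Proof.
apply/eqP; rewrite eqn_leq cnt_pos ?andbT; last by have := M_ge2; case: M.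
apply: (cnt_le1 (c := t1)) => r hr.
case/orP: (H1 r) => // h; by move: h; rewrite -L_lt hr L_t1 ltnn.
Qed.

Definition tau' := [seq cnt t | t <- iota 1 (M - 2)].

Lemma size_tau' : (size tau').+2 = M.
Proof. rewrite size_map size_iota; have := M_ge2; lia. Qed.

Lemma width_tau' t : (t < M)%N -> width tau' t = cnt t.
Proof.
move=> ht; rewrite /width.
case: eqP => [-> | h0]; first by rewrite cnt0.
case: eqP => [e | h1].
  have -> : t = M.-1 by rewrite -size_tau' e.
  by rewrite cntM.
rewrite (nth_map 0%N); last by rewrite size_iota; have := size_tau'; lia.
rewrite nth_iota; last by have := size_tau'; lia.
by congr cnt; lia.
Qed.

Lemma tau'_pos : all (fun t => (0 < t)%N) tau'.
Proof.
rewrite all_map; apply/allP => t; rewrite mem_iota /= => /andP [h1 h2].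
apply: cnt_pos; have := M_ge2; lia.
Qed.

Definition idx a := index (rep a) (Rl (L a)).

Lemma idx_lt a : (idx a < cnt (L a))%N.
Proof. by rewrite /idx /cnt index_mem rep_in_Rl. Qed.

Lemma h0P : (nat_of_ord (@ord0 (maxw tau').-1) < width tau' (@ord0 (size tau').+1))%N.
Proof. by []. Qed.

Definition h0 : elt tau' := exist _ (ord0, ord0) h0P.

Definition hpair a : 'I_(size tau').+2 * 'I_(maxw tau') :=
  (inord (L a), inord (idx a)).

Lemma hpair1 a : nat_of_ord (hpair a).1 = L a.
Proof. by rewrite /= inordK // size_tau' L_ltM. Qed.
Lemma hpair2 a : nat_of_ord (hpair a).2 = idx a.
Proof.
rewrite /= inordK // /maxw -/(maxw tau').
have := width_lt_maxw tau' (L a); rewrite width_tau' ?L_ltM // => h.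
exact: ltn_trans (idx_lt a) h.
Qed.

Lemma hpairP a : (fun p : 'I_(size tau').+2 * 'I_(maxw tau') => (nat_of_ord p.2 < width tau' p.1)%N) (hpair a).
Proof. by rewrite /= hpair2 hpair1 width_tau' ?L_ltM // idx_lt. Qed.

Definition h a : elt tau' := exist _ (hpair a) (hpairP a).

Lemma level_h a : level (h a) = L a.
Proof. exact: hpair1. Qed.

Lemma h_eq a b : h a = h b <-> eqv a b.
Proof.
split => [e | e].
  have e1 : L a = L b by rewrite -!level_h e.
  have e' : hpair a = hpair b := congr1 val e.
  have e2 : idx a = idx b by rewrite -hpair2 e' hpair2.
  have e3 : rep a = rep b.
    move: e2; rewrite /idx e1 => e2.
    have := rep_in_Rl a; rewrite e1 => ha.
    have hb := rep_in_Rl b.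
    by rewrite -(nth_index a ha) e2 nth_index.
  apply: eqv_trans (eqv_rep a) _; rewrite e3; exact: eqv_sym (eqv_rep b).
apply: val_inj => /=; rewrite /hpair /idx (L_compat e) (rep_eq e) //.
Qed.

Lemma h_surj b : exists a, h a = b.
Proof.
case: b => [[t j] hj].
have ht : (t < M)%N by rewrite -size_tau' ltn_ord.
have hj' : (j < size (Rl t))%N by move: hj; rewrite /= width_tau'.
set a := nth t0 (Rl t) j.
have ha : a \in Rl t by exact: mem_nth.
move: (ha); rewrite mem_filter => /andP [/andP [/eqP hr /eqP hl] _].
exists a; apply: val_inj => /=; rewrite /hpair /idx hl hr index_uniq ?Rl_uniq //.
by rewrite !inord_val.
Qed.

Lemma h_le a b : hle (h a) (h b) <-> (eqv a b || (pos a < pos b)%N).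
Proof.
rewrite /hle /hlt !level_h L_lt; split => /orP [e | ->]; rewrite ?orbT //.
  by have -> := proj1 (h_eq a b) (eqP e).
by rewrite (proj2 (h_eq a b) e) eqxx.
Qed.

End G.

Lemma G (T : finType) (eqv : rel T) (pos : T -> nat) :
  (forall a, eqv a a) -> (forall a b, eqv a b -> eqv b a) ->
  (forall a b c, eqv a b -> eqv b c -> eqv a c) ->
  (forall a b, eqv a b -> pos a = pos b) ->
  forall t0 t1 : T,
  (forall a, eqv a t0 || (pos t0 < pos a)%N) ->
  (forall a, eqv a t1 || (pos a < pos t1)%N) ->
  (pos t0 < pos t1)%N ->
  exists tau' : seq nat, all (fun t => (0 < t)%N) tau' /\
    exists h : T -> elt tau',
      (forall b, exists a, h a = b) /\
      (forall a b, h a = h b <-> eqv a b) /\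
      (forall a b, hle (h a) (h b) <-> (eqv a b || (pos a < pos b)%N)).
Proof.
move=> r s tr c t0 t1 H0 H1 H01.
exists (tau' eqv pos t1); split; first exact: (tau'_pos r s tr c H0 H1 H01).
exists (h r s tr c H0 H1 H01); split; first exact: h_surj.
split; [exact: h_eq | exact: h_le].
Qed.
Local Open Scope ring_scope.

Section Main.
Variables (R : realType) (tau : seq nat) (k : nat) (F : (elt tau -> R) -> Prop).
Hypothesis Hpos : all (fun t => (0 < t)%N) tau.
Hypothesis Hface : is_face (@in_COP R tau k) F.

Lemma F_COP x : F x -> in_COP k x.
Proof. by case: Hface => c [d [_ H]] /H []. Qed.

Lemma width_pos i : (i <= (size tau).+1)%N -> (0 < width tau i)%N.
Proof.
move=> hi; rewrite /width; case: eqP => // h0; case: eqP => // h1.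
move: hi h0 h1; case: i => //= i hi _ h1.
apply: (allP Hpos); apply: mem_nth.
rewrite ltn_neqAle -ltnS hi andbT; apply/eqP => e; by apply: h1; rewrite e.
Qed.

Lemma ex_level i : (i <= (size tau).+1)%N -> exists p : elt tau, level p = i.
Proof.
move=> hi.
have hP : (nat_of_ord (@ord0 (maxw tau).-1) < width tau (@inord (size tau).+1 i))%N.
  by rewrite /= inordK // width_pos.
by exists (exist _ (inord i, ord0) hP : elt tau); rewrite /level /= inordK.
Qed.

Lemma level_le (p : elt tau) : (level p <= (size tau).+1)%N.
Proof. by rewrite /level -ltnS ltn_ord. Qed.

Lemma level_uniq (p q : elt tau) : level p = level q -> width tau (level p) = 1%N -> p = q.
Proof.
case: p => [[p1 p2] hp]; case: q => [[q1 q2] hq]; rewrite /level /= => e w.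
apply: val_inj => /=.
have e1 : p1 = q1 by apply: val_inj.
move: hp hq; rewrite /= -e1 w !ltnS !leqn0 => /eqP h2 /eqP h3.
have e2 : p2 = q2 by apply: val_inj; rewrite /= h2 h3.
by rewrite e1 e2.
Qed.

Lemma width0 : width tau 0 = 1%N.
Proof. by []. Qed.
Lemma widthl : width tau (size tau).+1 = 1%N.
Proof. by rewrite /width eqxx. Qed.

Lemma covers_iff (a b : elt tau) : hcovers a b <-> (level a).+1 = level b.
Proof.
split.
  case; rewrite /hlt => hab hn; apply/eqP; rewrite eqn_leq hab /=.
  rewrite leqNgt; apply/negP => h.
  have [r hr] := @ex_level (level a).+1 (leq_trans (ltnW h) (level_le b)).
  by apply: hn; exists r; rewrite /hlt hr; split.
move=> e; split; first by rewrite /hlt -e.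
by case=> r []; rewrite /hlt -e => h1 h2; lia.
Qed.

Lemma mono x : F x -> forall n (a b : elt tau), (k < level a)%N ->
  level b = (level a + n.+1)%N -> x a <= x b.
Proof.
move=> /F_COP [_ _ _ Hord _]; elim=> [|n IH] a b ha hb.
  apply: Hord => //; first by rewrite hb; lia.
  by apply/covers_iff; rewrite hb addn1.
have hl : ((level a + n.+1) <= (size tau).+1)%N.
  by have := level_le b; rewrite hb; lia.
have [r hr] := ex_level hl.
apply: (le_trans (IH a r ha hr)).
apply: Hord; first by rewrite hr; lia.
  by rewrite hb; lia.
by apply/covers_iff; rewrite hr hb; lia.
Qed.


Lemma mono' x (a b : elt tau) : F x -> (k < level a)%N -> (level a < level b)%N -> x a <= x b.
Proof.
move=> hx ha hab; apply: (mono hx (n := (level b - level a).-1)) => //; lia.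
Qed.

Definition E (a b : elt tau) := forall x, F x -> x a = x b.
Notation pe := (pi_equiv k F).

Lemma pe_refl a : pe a a. Proof. exact: rst_refl. Qed.
Lemma pe_sym a b : pe a b -> pe b a. Proof. exact: rst_sym. Qed.
Lemma pe_trans a b c : pe a b -> pe b c -> pe a c. Proof. exact: rst_trans. Qed.

Lemma factD a b : pe a b -> a = b \/ [/\ (k < level a)%N, (k < level b)%N & E a b].
Proof.
elim=> {a b} [a b [ha hb _ he] | a | a b _ IH | a b c _ IH1 _ IH2].
- by right; split.
- by left.
- case: IH => [-> | [h1 h2 he]]; first by left.
  by right; split => // x hx; symmetry; apply: he.
- case: IH1 => [-> // | [h1 h2 he1]].
  case: IH2 => [<- | [h3 h4 he2]]; first by right; split.
  by right; split => // x hx; rewrite he1 // he2.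
Qed.

Lemma ech n (a b : elt tau) : (k < level a)%N -> level b = (level a + n.+1)%N -> E a b -> pe a b.
Proof.
elim: n a b => [|n IH] a b ha hb he.
  apply: rst_step; split => //; first by rewrite hb; lia.
  by apply/covers_iff; rewrite hb addn1.
have hl : ((level a).+1 <= (size tau).+1)%N by have := level_le b; rewrite hb; lia.
have [r hr] := ex_level hl.
have her : E a r.
  move=> x hx; apply/le_anti/andP; split.
    by apply: mono' => //; rewrite hr.
  rewrite (he x hx); apply: mono' => //; [rewrite hr; lia | rewrite hr hb; lia].
apply: (@pe_trans _ r).
  apply: rst_step; split => //; first by rewrite hr; lia.
  by apply/covers_iff; rewrite hr.
apply: (IH r b); first by rewrite hr; lia.
  by rewrite hb hr; lia.
by move=> x hx; rewrite -(her x hx) (he x hx).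
Qed.

Lemma ech' (a b : elt tau) : (k < level a)%N -> (level a < level b)%N -> E a b -> pe a b.
Proof. move=> ha hab; apply: (ech (n := (level b - level a).-1)) => //; lia. Qed.

Lemma Ssing a b : (level a <= k)%N -> pe a b -> b = a.
Proof. move=> hk /factD [-> // | [h _ _]]; lia. Qed.

Definition eqv (a b : elt tau) : bool := `[< pe a b >].
Definition lo_el a := arg_min a (eqv a) (@level tau).
Definition hi_el a := arg_max a (eqv a) (@level tau).
Definition lo a := level (lo_el a).
Definition hi a := level (hi_el a).
Definition pos a := (lo a + hi a)%N.

Lemma lo_spec a : pe a (lo_el a) /\ forall b, pe a b -> (lo a <= level b)%N.
Proof.
rewrite /lo /lo_el; case: arg_minnP => [|b hb hmin]; first by apply/asboolP/pe_refl.
split; [exact/asboolP | move=> c hc; apply: hmin; exact/asboolP].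
Qed.

Lemma hi_spec a : pe a (hi_el a) /\ forall b, pe a b -> (level b <= hi a)%N.
Proof.
rewrite /hi /hi_el; case: arg_maxnP => [|b hb hmax]; first by apply/asboolP/pe_refl.
split; [exact/asboolP | move=> c hc; apply: hmax; exact/asboolP].
Qed.

Lemma lo_le a : (lo a <= level a)%N.
Proof. exact: (lo_spec a).2 _ (pe_refl a). Qed.
Lemma hi_ge a : (level a <= hi a)%N.
Proof. exact: (hi_spec a).2 _ (pe_refl a). Qed.

Lemma pos_compat a b : pe a b -> pos a = pos b.
Proof.
move=> h; have h' := pe_sym h.
have l1 := (lo_spec a).2 _ (pe_trans h (lo_spec b).1).
have l2 := (lo_spec b).2 _ (pe_trans h' (lo_spec a).1).
have l3 := (hi_spec a).2 _ (pe_trans h (hi_spec b).1).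
have l4 := (hi_spec b).2 _ (pe_trans h' (hi_spec a).1).
rewrite /pos /lo /hi in l1 l2 l3 l4 *; lia.
Qed.

Lemma aux a b : (lo b < hi a)%N -> (lo a < hi b)%N -> (k < lo a)%N.
Proof.
move=> h1 h2; rewrite ltnNge; apply/negP => hk.
have e : hi_el a = lo_el a.
  apply: (Ssing hk); exact: pe_trans (pe_sym (lo_spec a).1) (hi_spec a).1.
have ehl : hi a = lo a by rewrite /hi e.
case: (factD (pe_trans (pe_sym (lo_spec b).1) (hi_spec b).1)) => [e' | [h3 _ _]].
  have : lo b = hi b by rewrite /lo /hi e'.
  lia.
rewrite -/(lo b) in h3; lia.
Qed.

Lemma NO a b : ~ pe a b -> (hi a <= lo b)%N \/ (hi b <= lo a)%N.
Proof.
move=> hn; case: (leqP (hi a) (lo b)) => h1; first by left.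
case: (leqP (hi b) (lo a)) => h2; first by right.
exfalso; apply: hn.
have ka := aux h1 h2; have kb := aux h2 h1.
have Ea : E (lo_el a) (hi_el a).
  case: (factD (pe_trans (pe_sym (lo_spec a).1) (hi_spec a).1)) => [-> // | [_ _ //]].
have Eb : E (lo_el b) (hi_el b).
  case: (factD (pe_trans (pe_sym (lo_spec b).1) (hi_spec b).1)) => [-> // | [_ _ //]].
have Eab : E (lo_el a) (hi_el b).
  move=> x hx; apply/le_anti/andP; split.
    by apply: mono'.
  rewrite -(Eb x hx) (Ea x hx); exact: mono'.
have := ech' ka h2 Eab => hp.
exact: pe_trans (lo_spec a).1 (pe_trans hp (pe_sym (hi_spec b).1)).
Qed.

Lemma K a b : (level a < level b)%N -> pe a b \/ (pos a < pos b)%N.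
Proof.
move=> hab; case: (asboolP (pe a b)) => h; first by left.
right; have := lo_le a; have := hi_ge a; have := lo_le b; have := hi_ge b.
rewrite /pos; case: (NO h); lia.
Qed.

Lemma quot_iff a b : quot_le k F a b <-> pe a b \/ (pos a < pos b)%N.
Proof.
split.
  elim=> {a b} [a b [u' [v' [h1 [h2 h3]]]] | a b c _ IH1 _ IH2].
    case/orP: h3 => [/eqP e | hl].
      by left; apply: pe_trans h1 _; rewrite e; apply: pe_sym.
    case: (K hl) => hh.
      by left; apply: pe_trans h1 (pe_trans hh (pe_sym h2)).
    by right; rewrite (pos_compat h1) (pos_compat h2).
  case: IH1 => h1; case: IH2 => h2.
  - by left; apply: pe_trans h1 h2.
  - by right; rewrite (pos_compat h1).
  - by right; rewrite -(pos_compat h2).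
  - by right; apply: ltn_trans h1 h2.
case=> h.
  apply: t_step; exists a, a; split; first exact: pe_refl.
  by split; [exact: pe_sym | rewrite /hle eqxx].
apply: t_step; exists (lo_el a), (hi_el b); split; first exact: (lo_spec a).1.
split; first exact: (hi_spec b).1.
rewrite /hle /hlt; apply/orP; right.
have := lo_le a; have := hi_ge a; have := lo_le b; have := hi_ge b.
rewrite /pos /lo /hi in h *; lia.
Qed.

Lemma mainG : exists tau' : seq nat, all (fun t => (0 < t)%N) tau' /\
    exists h : elt tau -> elt tau',
      (forall b, exists a, h a = b) /\
      (forall a b, h a = h b <-> pi_equiv k F a b) /\
      (forall a b, hle (h a) (h b) <-> quot_le k F a b).
Proof.
have [t0 ht0] := @ex_level 0%N (leq0n _).
have [t1 ht1] := @ex_level (size tau).+1 (leqnn _).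
have er : forall a, eqv a a by move=> a; apply/asboolP/pe_refl.
have es : forall a b, eqv a b -> eqv b a by move=> a b /asboolP h; apply/asboolP/pe_sym.
have et : forall a b c, eqv a b -> eqv b c -> eqv a c.
  by move=> a b c /asboolP h1 /asboolP h2; apply/asboolP/(pe_trans h1 h2).
have ec : forall a b, eqv a b -> pos a = pos b by move=> a b /asboolP; apply: pos_compat.
have H0 : forall a, eqv a t0 || (pos t0 < pos a)%N.
  move=> a; case: (posnP (level a)) => la.
    have e : a = t0 by apply: level_uniq; rewrite ?la ?ht0.
    by rewrite e er.
  have hl : (level t0 < level a)%N by rewrite ht0.
  case: (K hl).
    by move=> h; apply/orP; left; apply/asboolP/pe_sym.
  by move=> ->; rewrite orbT.
have H1 : forall a, eqv a t1 || (pos a < pos t1)%N.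
  move=> a; case: (ltnP (level a) (size tau).+1) => la.
    have hl : (level a < level t1)%N by rewrite ht1.
    case: (K hl).
      by move=> h; apply/orP; left; apply/asboolP.
    by move=> ->; rewrite orbT.
  have la' : level a = (size tau).+1 by have := level_le a; lia.
  have e : a = t1 by apply: level_uniq; rewrite ?la' ?ht1 // widthl.
  by rewrite e er.
have H01 : (pos t0 < pos t1)%N.
  have hl : (level t0 < level t1)%N by rewrite ht0 ht1.
  case: (K hl) => //.
  move=> hp; have hk : (level t0 <= k)%N by rewrite ht0.
  have e := Ssing hk hp.
  by move: ht1; rewrite e ht0.
have [tau' [htau [h [hs [he hl]]]]] := G er es et ec H0 H1 H01.
exists tau'; split => //; exists h; split => //; split => a b.
  by rewrite he; split => [/asboolP | ?]; last apply/asboolP.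
rewrite hl quot_iff; split.
  by case/orP => [/asboolP | ]; [left | right].
by case => [hp | ->]; rewrite ?orbT //; apply/orP; left; apply/asboolP.
Qed.

End Main.

Theorem lemma3p5 (R : realType) (tau : seq nat) (k : nat)
  (F : (elt tau -> R) -> Prop) :
  all (fun t => (0 < t)%N) tau ->
  (k <= size tau)%N ->
  is_face (@in_COP R tau k) F ->
  (exists x, F x) ->
  (forall p : elt tau, (0 < level p <= k)%N -> exists x, F x /\ x p != 0) ->
  (forall (g : nat -> elt tau) (q : elt tau),
     (forall i, (1 <= i <= k)%N -> level (g i) = i) -> level q = k.+1 ->
     exists x, F x /\ \sum_(1 <= i < k.+1) x (g i) != x q) ->
  exists tau' : seq nat, all (fun t => (0 < t)%N) tau' /\
    exists h : elt tau -> elt tau',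
      (forall b, exists a, h a = b) /\
      (forall a b, h a = h b <-> pi_equiv k F a b) /\
      (forall a b, hle (h a) (h b) <-> quot_le k F a b).
Proof.
move=> Hpos _ Hface _ _ _.
exact: (mainG Hpos Hface).
Qed.
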